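(* Let $d>1$ and let $\mathcal{H}_1,\dots,\mathcal{H}_d$ be separable Hilbert spaces, $\mathcal{H}=\bigotimes_{j=1}^d\mathcal{H}_j$. Let $r\ge 1$ and, for each $j\in\{1,\dots,d\}$ and $k\in\{1,\dots,r\}$, let $\{f_{j,k,n}\}_{n>0}$ be a sequence in $\mathcal{H}_j$, such that for each $j$ the $r$ sequences $\{f_{j,1,n}\}_{n>0},\dots,\{f_{j,r,n}\}_{n>0}$ are linearly independent. Let $\mathcal{F}=\{f_{n_1,\dots,n_d}\}_{n_1,\dots,n_d>0}$ be the sequence in $\mathcal{H}$ given by $$f_{n_1,\dots,n_d}=\sum_{k=1}^r \bigotimes_{j=1}^d f_{j,k,n_j}.$$ Then: (i) $\mathcal{F}$ is a Bessel sequence in $\mathcal{H}$ if and only if $\{f_{j,k,n}\}_{n>0}$ is a Bessel sequence in $\mathcal{H}_j$ for each $(j,k)\in\{1,\dots,d\}\times\{1,\dots,r\}$. (ii) If $\mathcal{F}$ is a frame for $\mathcal{H}$, then for each $j=1,\dots,d$ the concatenated sequence $\{f_{j,k,n}\}_{1\le k\le r,\,n>0}$ is a frame for $\mathcal{H}_j$.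
   Context: A sequence $\{f_n\}$ in a Hilbert space $\mathcal{H}$ is a Bessel sequence if there is $B>0$ with $\sum_n|\langle f,f_n\rangle|^2\le B\|f\|^2$ for all $f\in\mathcal{H}$; it is a frame if moreover there is $A>0$ with $A\|f\|^2\le\sum_n|\langle f,f_n\rangle|^2$ for all $f$. Linear independence of sequences is meant in the vector space of all sequences in $\mathcal{H}_j$ (i.e. no nontrivial linear combination $\sum_k c_k f_{j,k,n}$ vanishes for all $n$). *)

(* Defs.v *)
From HB Require Import structures.
From mathcomp Require Import all_boot all_order all_algebra.
From mathcomp Require Import complex.
From mathcomp Require Import boolp classical_sets functions reals ereal esum.
Set Implicit Arguments. Unset Strict Implicit. Unset Printing Implicit Defensive.
Import Order.TTheory GRing.Theory Num.Theory.
Local Open Scope classical_set_scope.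
Local Open Scope ring_scope.

(* Concrete model of separable complex Hilbert spaces:
   l2(S) = { x : T -> C | x vanishes outside S, sum_i |x i|^2 < oo }
   for a countable index set S.  Every separable Hilbert space is unitarily
   isomorphic to some l2(S) with S a subset of nat. *)

Definition abs2 (R : realType) (z : R[i]) : R := complex.Re z ^+ 2 + complex.Im z ^+ 2.

Section L2.
Variables (R : realType) (T : choiceType).

Definition sqnorm (x : T -> R[i]) : \bar R :=
  esum setT (fun i => (abs2 (x i))%:E).

Definition l2 (S : set T) : set (T -> R[i]) :=
  [set x | (forall i, ~ S i -> x i = 0) /\ (sqnorm x < +oo)%E].

Definition rsum (u : T -> R) : R :=
  fine (esum setT (fun i => (Num.max (u i) 0)%:E))
  - fine (esum setT (fun i => (Num.max (- u i) 0)%:E)).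

Definition csum (u : T -> R[i]) : R[i] :=
  Complex (rsum (fun i => complex.Re (u i))) (rsum (fun i => complex.Im (u i))).

Definition inner (x y : T -> R[i]) : R[i] := csum (fun i => x i * conjc (y i)).

Definition bessel (N : choiceType) (S : set T) (g : N -> T -> R[i]) : Prop :=
  (forall n, l2 S (g n)) /\
  exists B : R, 0 < B /\
    forall x, l2 S x ->
      (esum setT (fun n => (abs2 (inner x (g n)))%:E)
        <= B%:E * sqnorm x)%E.

Definition frame (N : choiceType) (S : set T) (g : N -> T -> R[i]) : Prop :=
  bessel S g /\
  exists A : R, 0 < A /\
    forall x, l2 S x ->
      (A%:E * sqnorm x
        <= esum setT (fun n => (abs2 (inner x (g n)))%:E))%E.

End L2.

(* Hilbert tensor product  l2(I_1) (x) ... (x) l2(I_d) = l2(I_1 x ... x I_d),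
   with multi-indices t : {ffun 'I_d -> nat}; the elementary tensor
   x_1 (x) ... (x) x_d is t |-> prod_j x_j (t j). *)
Definition prodset (d : nat) (I : 'I_d -> set nat) : set {ffun 'I_d -> nat} :=
  [set t | forall j, I j (t j)].

Definition tensor (R : realType) (d : nat) (x : 'I_d -> nat -> R[i])
  : {ffun 'I_d -> nat} -> R[i] :=
  fun t => \prod_(j < d) x j (t j).

Definition Fseq (R : realType) (d r : nat)
  (f : 'I_d -> 'I_r -> nat -> nat -> R[i])
  : {ffun 'I_d -> nat} -> {ffun 'I_d -> nat} -> R[i] :=
  fun m => fun t => \sum_(k < r) tensor (fun j => f j k (m j)) t.

(* Main.v *)
Require Import Defs.
From HB Require Import structures.
From mathcomp Require Import all_boot all_order all_algebra.
From mathcomp Require Import complex.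
From mathcomp Require Import boolp classical_sets functions reals ereal esum fsbigop cardinality.
From mathcomp Require Import ring lra.
Import Order.TTheory GRing.Theory Num.Theory.
Local Open Scope classical_set_scope.
Local Open Scope ring_scope.
Set Implicit Arguments. Unset Strict Implicit. Unset Printing Implicit Defensive.
Section ES.
Variable R : realType.
Local Open Scope ereal_scope.

Lemma esumZ (T : choiceType) (a : T -> \bar R) (c : R) : (0 <= c)%R ->
  (forall t, 0 <= a t) ->
  esum setT (fun t => c%:E * a t) = c%:E * esum setT a.
Proof.
move=> c0 a0; rewrite /esum -ereal_supZl//; last first.
  by apply/set0P; exists 0; exists set0; [exact: fsets_set0|rewrite fsbig_set0].
congr ereal_sup; apply/seteqP; split=> x /=.
  by move=> [A HA <-]; exists (\sum_(i \in A) a i); [exists A|rewrite ge0_mule_fsumr].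
by move=> [y [A HA <-] <-]; exists A => //; rewrite ge0_mule_fsumr.
Qed.

Lemma esum_supp (T T' : choiceType) (e : T' -> T) (a : T -> \bar R) :
  injective e -> (forall t, 0 <= a t) -> (forall t, ~ range e t -> a t = 0) ->
  esum setT a = esum setT (a \o e).
Proof.
move=> ei a0 az.
rewrite (esumID (range e)) //; rewrite setTI.
rewrite [X in _ + X]esum1 ?adde0; last by move=> t [_ /az].

by rewrite (esum_image setT e a) //; move=> x y _ _; apply: ei.
Qed.

Lemma esum_pt (T : choiceType) (s : T) (a : T -> \bar R) :
  (forall t, 0 <= a t) -> (forall t, t <> s -> a t = 0) ->
  esum setT a = a s.
Proof.
move=> a0 az.
rewrite (esumID [set s]) //; rewrite setTI esum_set1 //.
by rewrite [X in _ + X]esum1 ?adde0 // => t [_ /az].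
Qed.

Lemma esum_sub (T : choiceType) (A : set T) (a : T -> \bar R) :
  (forall t, 0 <= a t) -> esum A a <= esum setT a.
Proof.
move=> a0; rewrite [leRHS](esumID A) // setTI leeDl //.
by apply: esum_ge0.
Qed.

Lemma esum_line (T T' : choiceType) (e : T' -> T) (a : T -> \bar R) :
  injective e -> (forall t, 0 <= a t) ->
  esum setT (a \o e) <= esum setT a.
Proof.
move=> ei a0; rewrite -(esum_image setT e a); last by move=> x y _ _; apply: ei.
exact: esum_sub.
Qed.

Lemma esum_part (T K : choiceType) (p : T -> K) (a : T -> \bar R) :
  (forall t, 0 <= a t) ->
  esum setT a = esum setT (fun k => esum setT (fun t => if p t == k then a t else 0)).
Proof.
move=> a0.
rewrite (@esum_esum _ _ _ setT (fun _ => setT)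
  (fun k t => if p t == k then a t else 0)); last by move=> *; case: ifP.
have -> : [set: K] `*`` (fun _ => [set: T]) = setT by apply/seteqP; split.
rewrite (esum_supp (e := fun t => (p t, t))).
- by apply: eq_esum => t _ /=; rewrite eqxx.
- by move=> x y [_ ->].
- by move=> [k t]; case: ifP.
- move=> [k t] /= H; case: eqP => // E; exfalso; apply: H; exists t => //.
  by rewrite E.
Qed.

End ES.

Section RS.
Variable R : realType.
Local Open Scope ereal_scope.

Definition nS (T : choiceType) (u : T -> R) :=
  esum setT (fun t => (`|u t|)%:E) < +oo.

Definition pos (T : Type) (u : T -> R) t := (Num.max (u t) 0)%R.
Definition neg (T : Type) (u : T -> R) t := (Num.max (- u t) 0)%R.

Lemma maxr0 (x : R) : (Num.max x 0 = if 0 <= x then x else 0)%R.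
Proof. by case: (leP 0%R x) => h //; rewrite max_l // ltW. Qed.
Lemma maxNr0 (x : R) : (Num.max (- x) 0 = if 0 <= x then 0 else - x)%R.
Proof. case: (leP 0%R x) => h. by rewrite max_r // oppr_le0. by rewrite max_l // oppr_ge0 ltW. Qed.

Lemma pos_ge0 (T : Type) (u : T -> R) t : (0 <= pos u t)%R.
Proof. by rewrite /pos le_max lexx orbT. Qed.
Lemma neg_ge0 (T : Type) (u : T -> R) t : (0 <= neg u t)%R.
Proof. by rewrite /neg le_max lexx orbT. Qed.
Lemma posneg (T : Type) (u : T -> R) t : (pos u t - neg u t = u t)%R.
Proof.
rewrite /pos /neg maxr0 maxNr0; case: ifP => _; rewrite ?subr0 ?sub0r ?opprK //.
Qed.
Lemma posnegD (T : Type) (u : T -> R) t : (pos u t + neg u t = `|u t|)%R.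
Proof.
rewrite /pos /neg maxr0 maxNr0; case: ifP => h; rewrite ?addr0 ?add0r.
  by rewrite ger0_norm.
by rewrite ltr0_norm // ltNge h.
Qed.
Lemma pos_le (T : Type) (u : T -> R) t : (pos u t <= `|u t|)%R.
Proof. by rewrite -posnegD lerDl neg_ge0. Qed.
Lemma neg_le (T : Type) (u : T -> R) t : (neg u t <= `|u t|)%R.
Proof. by rewrite -posnegD lerDr pos_ge0. Qed.

Lemma fin_lt (x : \bar R) : 0 <= x -> x < +oo -> x \is a fin_num.
Proof. by move=> x0 xf; rewrite ge0_fin_numE. Qed.

Lemma esum_fin (T : choiceType) (a : T -> R) :
  (forall t, 0 <= a t)%R -> esum setT (fun t => (a t)%:E) < +oo ->
  esum setT (fun t => (a t)%:E) \is a fin_num.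
Proof. by move=> a0 h; apply: fin_lt => //; apply: esum_ge0 => t _; rewrite lee_fin. Qed.

Lemma esum_dom (T : choiceType) (a b : T -> R) :
  (forall t, a t <= b t)%R ->
  esum setT (fun t => (b t)%:E) < +oo -> esum setT (fun t => (a t)%:E) < +oo.
Proof. by move=> ab; apply: le_lt_trans; apply: le_esum => t _; rewrite lee_fin. Qed.

Lemma fine_esum_ge0 (T : choiceType) (a : T -> R) :
  (forall t, 0 <= a t)%R -> (0 <= fine (esum setT (fun t => (a t)%:E)))%R.
Proof. by move=> a0; apply: fine_ge0; apply: esum_ge0 => t _; rewrite lee_fin. Qed.

Lemma fine_esumD (T : choiceType) (a b : T -> R) :
  (forall t, 0 <= a t)%R -> (forall t, 0 <= b t)%R ->
  esum setT (fun t => (a t)%:E) < +oo -> esum setT (fun t => (b t)%:E) < +oo ->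
  fine (esum setT (fun t => (a t + b t)%:E)) =
  (fine (esum setT (fun t => (a t)%:E)) + fine (esum setT (fun t => (b t)%:E)))%R.
Proof.
move=> a0 b0 fa fb.
rewrite (eq_esum (b := fun t => (a t)%:E + (b t)%:E)) // esumD //; last 2 first.
- by move=> t _; rewrite lee_fin.
- by move=> t _; rewrite lee_fin.
by rewrite fineD // esum_fin.
Qed.

Lemma esumDr (T : choiceType) (a b : T -> R) :
  (forall t, 0 <= a t)%R -> (forall t, 0 <= b t)%R ->
  esum setT (fun t => (a t + b t)%:E) =
  esum setT (fun t => (a t)%:E) + esum setT (fun t => (b t)%:E).
Proof.
move=> a0 b0; rewrite (eq_esum (b := fun t => (a t)%:E + (b t)%:E)) // esumD //.
- by move=> t _; rewrite lee_fin.
- by move=> t _; rewrite lee_fin.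
Qed.

Lemma esumZr (T : choiceType) (c : R) (a : T -> R) : (0 <= c)%R ->
  (forall t, 0 <= a t)%R ->
  esum setT (fun t => (c * a t)%:E) = c%:E * esum setT (fun t => (a t)%:E).
Proof.
move=> c0 a0; rewrite -esumZ //; try by move=> t; rewrite lee_fin.
Qed.

Lemma eq_rsum (T : choiceType) (u v : T -> R) : (forall t, u t = v t) -> rsum u = rsum v.
Proof. by move=> h; congr rsum; apply/funext. Qed.

Lemma rsum_pm (T : choiceType) (a b : T -> R) : (forall t, 0 <= a t)%R -> (forall t, 0 <= b t)%R ->
  esum setT (fun t => (a t)%:E) < +oo -> esum setT (fun t => (b t)%:E) < +oo ->
  rsum (fun t => a t - b t)%R =
  (fine (esum setT (fun t => (a t)%:E)) - fine (esum setT (fun t => (b t)%:E)))%R.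
Proof.
move=> a0 b0 fa fb; rewrite /rsum.
have hP : forall t, (Num.max (a t - b t) 0 <= a t)%R.
  by move=> t; rewrite ge_max a0 andbT lerBlDr lerDl.
have hN : forall t, (Num.max (- (a t - b t)) 0 <= b t)%R.
  by move=> t; rewrite ge_max b0 andbT opprB lerBlDr lerDl.
have m0 : forall x : R, (0 <= Num.max x 0)%R by move=> x; rewrite le_max lexx orbT.
have fP := esum_dom hP fa; have fN := esum_dom hN fb.
have E := @fine_esumD T (fun t => Num.max (a t - b t) 0)%R b (fun t => m0 _) b0 fP fb.
have E2 := @fine_esumD T (fun t => Num.max (- (a t - b t)) 0)%R a (fun t => m0 _) a0 fN fa.
have pw : forall t, (Num.max (a t - b t) 0 + b t = Num.max (- (a t - b t)) 0 + a t)%R.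
  by move=> t; rewrite maxr0 maxNr0; case: ifP => _; ring.
rewrite (eq_esum (b := fun t => (Num.max (- (a t - b t)) 0 + a t)%:E)) in E; last first.
  by move=> t _; rewrite pw.
move: E; rewrite E2 => E; lra.
Qed.

Lemma rsumE (T : choiceType) (u : T -> R) :
  rsum u = (fine (esum setT (fun t => (pos u t)%:E)) - fine (esum setT (fun t => (neg u t)%:E)))%R.
Proof. by []. Qed.

Lemma nS_pos (T : choiceType) (u : T -> R) : nS u -> esum setT (fun t => (pos u t)%:E) < +oo.
Proof. by apply: esum_dom => t; apply: pos_le. Qed.
Lemma nS_neg (T : choiceType) (u : T -> R) : nS u -> esum setT (fun t => (neg u t)%:E) < +oo.
Proof. by apply: esum_dom => t; apply: neg_le. Qed.

Lemma rsum_ge0E (T : choiceType) (a : T -> R) : (forall t, 0 <= a t)%R ->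
  rsum a = fine (esum setT (fun t => (a t)%:E)).
Proof.
move=> a0; rewrite /rsum [X in (_ - fine X)%R]esum1 ?subr0; last first.
  by move=> t _; rewrite maxNr0 a0.
by congr fine; apply: eq_esum => t _; rewrite maxr0 a0.
Qed.

Lemma rsum0 (T : choiceType) (u : T -> R) : (forall t, u t = 0%R) -> rsum u = 0%R.
Proof. by move=> h; rewrite (eq_rsum h) rsum_ge0E // esum1. Qed.

Lemma rsumD (T : choiceType) (u v : T -> R) : nS u -> nS v ->
  rsum (fun t => u t + v t)%R = (rsum u + rsum v)%R.
Proof.
move=> su sv.
rewrite (eq_rsum (v := fun t => (pos u t + pos v t) - (neg u t + neg v t))%R); last first.
  by move=> t; rewrite -(posneg u t) -(posneg v t); ring.
rewrite rsum_pm; last 4 first.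
- by move=> t; rewrite addr_ge0 // pos_ge0.
- by move=> t; rewrite addr_ge0 // neg_ge0.
- by rewrite (@esumDr T (pos u) (pos v)) ?lte_add_pinfty ?nS_pos // => t; rewrite pos_ge0.
- by rewrite (@esumDr T (neg u) (neg v)) ?lte_add_pinfty ?nS_neg // => t; rewrite neg_ge0.
rewrite (@fine_esumD T (pos u) (pos v) (pos_ge0 u) (pos_ge0 v) (nS_pos su) (nS_pos sv)).
rewrite (@fine_esumD T (neg u) (neg v) (neg_ge0 u) (neg_ge0 v) (nS_neg su) (nS_neg sv)).
rewrite !rsumE; ring.
Qed.

Lemma rsumN (T : choiceType) (u : T -> R) : nS u -> rsum (fun t => - u t)%R = (- rsum u)%R.
Proof.
move=> su; rewrite (eq_rsum (v := fun t => neg u t - pos u t)%R); last first.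
  by move=> t; rewrite -(posneg u t) opprB.
rewrite (@rsum_pm T (neg u) (pos u) (neg_ge0 u) (pos_ge0 u) (nS_neg su) (nS_pos su)).
by rewrite rsumE opprB.
Qed.

Lemma rsumZ (T : choiceType) (c : R) (u : T -> R) : nS u -> rsum (fun t => c * u t)%R = (c * rsum u)%R.
Proof.
move=> su.
wlog c0 : c / (0 <= c)%R.
  move=> H; have [h|h] := leP 0%R c; first exact: H.
  rewrite (eq_rsum (v := fun t => - ((- c) * u t))%R); last by move=> t; ring.
  rewrite rsumN; last first.
    apply: (esum_dom (b := fun t => (- c) * `|u t|)%R).
      by move=> t; rewrite normrM ger0_norm // oppr_ge0 ltW.
    rewrite esumZr ?lte_mul_pinfty //; last by rewrite oppr_ge0 ltW.
    by rewrite lee_fin oppr_ge0 ltW.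
  by rewrite H ?oppr_ge0 ?(ltW h) //; ring.
rewrite (eq_rsum (v := fun t => c * pos u t - c * neg u t)%R); last first.
  by move=> t; rewrite -mulrBr posneg.
have hp : forall t, (0 <= c * pos u t)%R by move=> t; rewrite mulr_ge0 // pos_ge0.
have hn : forall t, (0 <= c * neg u t)%R by move=> t; rewrite mulr_ge0 // neg_ge0.
have Ep : esum setT (fun t => (c * pos u t)%:E) = c%:E * esum setT (fun t => (pos u t)%:E).
  by rewrite esumZr // => t; rewrite pos_ge0.
have En : esum setT (fun t => (c * neg u t)%:E) = c%:E * esum setT (fun t => (neg u t)%:E).
  by rewrite esumZr // => t; rewrite neg_ge0.
have fp := nS_pos su; have fn := nS_neg su.
rewrite rsum_pm //; last 2 first.
- by rewrite Ep lte_mul_pinfty.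
- by rewrite En lte_mul_pinfty.
rewrite Ep En !fineM ?rsumE //; last 2 first.
- by apply: fin_lt => //; apply: esum_ge0 => t _; rewrite lee_fin neg_ge0.
- by apply: fin_lt => //; apply: esum_ge0 => t _; rewrite lee_fin pos_ge0.
rewrite /=; ring.
Qed.

Lemma rsum_abs (T : choiceType) (u : T -> R) : nS u ->
  (`|rsum u| <= fine (esum setT (fun t => (`|u t|)%:E)))%R.
Proof.
move=> su; rewrite rsumE.
rewrite (eq_esum (a := fun t => (`|u t|)%:E) (b := fun t => (pos u t + neg u t)%:E)); last first.
  by move=> t _; rewrite posnegD.
rewrite (@fine_esumD T (pos u) (neg u) (pos_ge0 u) (neg_ge0 u) (nS_pos su) (nS_neg su)).
have h1 := fine_esum_ge0 (pos_ge0 u); have h2 := fine_esum_ge0 (neg_ge0 u).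
rewrite ler_norml; apply/andP; split; lra.
Qed.

Lemma rsum_supp (T T' : choiceType) (e : T' -> T) (u : T -> R) :
  injective e -> (forall t, ~ range e t -> u t = 0%R) -> rsum u = rsum (u \o e).
Proof.
move=> ei uz; rewrite /rsum.
rewrite (esum_supp (e := e) (a := fun i => (Num.max (u i) 0)%:E)) //; last 2 first.
- by move=> t; rewrite lee_fin le_max lexx orbT.
- by move=> t /uz ->; rewrite maxxx.
rewrite (esum_supp (e := e) (a := fun i => (Num.max (- u i) 0)%:E)) //.
- by move=> t; rewrite lee_fin le_max lexx orbT.
- by move=> t /uz ->; rewrite oppr0 maxxx.
Qed.

Lemma rsum_part (T K : choiceType) (p : T -> K) (u : T -> R) : nS u ->
  rsum u = rsum (fun k => rsum (fun t => if p t == k then u t else 0%R)).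
Proof.
move=> su.
set PK := fun k => fine (esum setT (fun t => (if p t == k then pos u t else 0%R)%:E)).
set NK := fun k => fine (esum setT (fun t => (if p t == k then neg u t else 0%R)%:E)).
have fp := nS_pos su; have fn := nS_neg su.
have Hp k : esum setT (fun t => (if p t == k then pos u t else 0%R)%:E) < +oo.
  by apply: esum_dom fp => t; case: ifP => _; rewrite ?pos_ge0.
have Hn k : esum setT (fun t => (if p t == k then neg u t else 0%R)%:E) < +oo.
  by apply: esum_dom fn => t; case: ifP => _; rewrite ?neg_ge0.
have PKE k : (PK k)%:E = esum setT (fun t => (if p t == k then pos u t else 0%R)%:E).
  by rewrite fineK // esum_fin // => t; case: ifP => _; rewrite ?pos_ge0.
have NKE k : (NK k)%:E = esum setT (fun t => (if p t == k then neg u t else 0%R)%:E).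
  by rewrite fineK // esum_fin // => t; case: ifP => _; rewrite ?neg_ge0.
rewrite (eq_rsum (u := fun k => rsum _) (v := fun k => PK k - NK k)%R); last first.
  move=> k; rewrite /rsum /PK /NK; congr (fine _ - fine _)%R; apply: eq_esum => t _;
  by case: ifP => _; rewrite ?oppr0 ?maxxx.
have eP : esum setT (fun k => (PK k)%:E) = esum setT (fun t => (pos u t)%:E).
  rewrite (esum_part p); last by move=> t; rewrite lee_fin pos_ge0.
  by apply: eq_esum => k _; rewrite PKE; apply: eq_esum => t _; case: ifP.
have eN : esum setT (fun k => (NK k)%:E) = esum setT (fun t => (neg u t)%:E).
  rewrite (esum_part p); last by move=> t; rewrite lee_fin neg_ge0.
  by apply: eq_esum => k _; rewrite NKE; apply: eq_esum => t _; case: ifP.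
rewrite rsum_pm ?eP ?eN //.
- by move=> k; apply: fine_ge0; rewrite -PKE lee_fin; apply: fine_ge0; apply: esum_ge0 => t _; case: ifP => _; rewrite lee_fin ?pos_ge0.
- by move=> k; apply: fine_ge0; apply: esum_ge0 => t _; case: ifP => _; rewrite lee_fin ?neg_ge0.
Qed.

End RS.

Section CS.
Variable R : realType.
Local Notation C := (R[i]).
Local Notation Re := (@complex.Re R).
Local Notation Im := (@complex.Im R).

Lemma ReD (x y : C) : Re (x + y) = Re x + Re y. Proof. by case: x; case: y. Qed.
Lemma ImD (x y : C) : Im (x + y) = Im x + Im y. Proof. by case: x; case: y. Qed.
Lemma ReM (x y : C) : Re (x * y) = Re x * Re y - Im x * Im y. Proof. by case: x => a b; case: y => c d /=. Qed.
Lemma ImM (x y : C) : Im (x * y) = Re x * Im y + Im x * Re y. Proof. by case: x => a b; case: y => c d /=; ring. Qed.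
Lemma ReN (x : C) : Re (- x) = - Re x. Proof. by case: x. Qed.
Lemma ImN (x : C) : Im (- x) = - Im x. Proof. by case: x. Qed.
Lemma ReC (a b : R) : Re (Complex a b) = a. Proof. by []. Qed.
Lemma ImC (a b : R) : Im (Complex a b) = b. Proof. by []. Qed.
Lemma Re0 : Re 0 = 0. Proof. by []. Qed.
Lemma Im0 : Im 0 = 0. Proof. by []. Qed.
Lemma ReJ (x : C) : Re (conjc x) = Re x. Proof. by case: x. Qed.
Lemma ImJ (x : C) : Im (conjc x) = - Im x. Proof. by case: x. Qed.
Lemma Re_sum (K : Type) (s : seq K) (F : K -> C) : Re (\sum_(k <- s) F k) = \sum_(k <- s) Re (F k).
Proof. by elim: s => [|k s IH]; rewrite ?big_nil ?big_cons ?ReD ?IH. Qed.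
Lemma Im_sum (K : Type) (s : seq K) (F : K -> C) : Im (\sum_(k <- s) F k) = \sum_(k <- s) Im (F k).
Proof. by elim: s => [|k s IH]; rewrite ?big_nil ?big_cons ?ImD ?IH. Qed.
Lemma abs2_ge0 (x : C) : 0 <= abs2 x. Proof. by rewrite /abs2 addr_ge0 // sqr_ge0. Qed.
Lemma cplx_eq (x y : C) : Re x = Re y -> Im x = Im y -> x = y.
Proof. by case: x; case: y => /= a b c d -> ->. Qed.

Definition cS (T : choiceType) (u : T -> C) := nS (fun t => Re (u t)) /\ nS (fun t => Im (u t)).

Lemma nS_dom (T : choiceType) (u : T -> R) (v : T -> R) :
  (forall t, `|u t| <= v t) -> (esum setT (fun t => (v t)%:E) < +oo)%E -> nS u.
Proof. by move=> h; apply: esum_dom. Qed.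

Lemma nS_D (T : choiceType) (u v : T -> R) : nS u -> nS v -> nS (fun t => u t + v t).
Proof.
move=> su sv; apply: (@nS_dom _ _ (fun t => `|u t| + `|v t|)).
  by move=> t; apply: ler_normD.
by rewrite esumDr ?lte_add_pinfty.
Qed.

Lemma nS_Z (T : choiceType) (c : R) (u : T -> R) : nS u -> nS (fun t => c * u t).
Proof.
move=> su; apply: (@nS_dom _ _ (fun t => `|c| * `|u t|)).
  by move=> t; rewrite normrM.
by rewrite esumZr ?lte_mul_pinfty.
Qed.

Lemma nS_N (T : choiceType) (u : T -> R) : nS u -> nS (fun t => - u t).
Proof. by move=> su; apply: (@nS_dom _ _ (fun t => `|u t|)) => // t; rewrite normrN. Qed.

Lemma cS_D (T : choiceType) (u v : T -> C) : cS u -> cS v -> cS (fun t => u t + v t).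
Proof.
move=> [su1 su2] [sv1 sv2]; split.
  by apply: (eq_ind _ _ (nS_D su1 sv1)); congr nS; apply/funext => t; rewrite ReD.
by apply: (eq_ind _ _ (nS_D su2 sv2)); congr nS; apply/funext => t; rewrite ImD.
Qed.

Lemma cS_Z (T : choiceType) (c : C) (u : T -> C) : cS u -> cS (fun t => c * u t).
Proof.
move=> [su1 su2]; split.
  apply: (eq_ind _ _ (nS_D (nS_Z (Re c) su1) (nS_N (nS_Z (Im c) su2)))).
  by congr nS; apply/funext => t; rewrite ReM.
apply: (eq_ind _ _ (nS_D (nS_Z (Re c) su2) (nS_Z (Im c) su1))).
by congr nS; apply/funext => t; rewrite ImM.
Qed.

Lemma nS0 (T : choiceType) : nS (fun _ : T => 0 : R).
Proof. by rewrite /nS esum1 // => t _; rewrite normr0. Qed.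

Lemma cS_sum (T : choiceType) (K : Type) (s : seq K) (F : K -> T -> C) :
  (forall k, cS (F k)) -> cS (fun t => \sum_(k <- s) F k t).
Proof.
move=> h; elim: s => [|k s IH].
  by split; apply: (eq_ind _ _ (@nS0 T)); congr nS; apply/funext => t; rewrite big_nil.
have -> : (fun t => \sum_(k0 <- k :: s) F k0 t) = (fun t => F k t + \sum_(k0 <- s) F k0 t).
  by apply/funext => t; rewrite big_cons.
exact: cS_D.
Qed.

Lemma eq_csum (T : choiceType) (u v : T -> C) : (forall t, u t = v t) -> csum u = csum v.
Proof. by move=> h; congr csum; apply/funext. Qed.

Lemma csumD (T : choiceType) (u v : T -> C) : cS u -> cS v ->
  csum (fun t => u t + v t) = csum u + csum v.
Proof.
move=> [su1 su2] [sv1 sv2]; rewrite /csum; apply: cplx_eq; rewrite ?ReD ?ImD ?ReC ?ImC.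
  by rewrite -rsumD //; apply: eq_rsum => t; rewrite ReD.
by rewrite -rsumD //; apply: eq_rsum => t; rewrite ImD.
Qed.

Lemma csum0 (T : choiceType) (u : T -> C) : (forall t, u t = 0) -> csum u = 0.
Proof. by move=> h; rewrite /csum !rsum0 // => t; rewrite h. Qed.

Lemma csum_sum (T : choiceType) (K : Type) (s : seq K) (F : K -> T -> C) :
  (forall k, cS (F k)) -> csum (fun t => \sum_(k <- s) F k t) = \sum_(k <- s) csum (F k).
Proof.
move=> h; elim: s => [|k s IH].
  by rewrite big_nil csum0 // => t; rewrite big_nil.
rewrite big_cons -IH -csumD //; last exact: cS_sum.
by apply: eq_csum => t; rewrite big_cons.
Qed.

Lemma csumZ (T : choiceType) (c : C) (u : T -> C) : cS u -> csum (fun t => c * u t) = c * csum u.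
Proof.
move=> [su1 su2]; rewrite /csum; apply: cplx_eq; [rewrite ReM !ReC !ImC | rewrite ImM !ReC !ImC].
  rewrite (eq_rsum (v := fun t => Re c * Re (u t) + - (Im c * Im (u t)))); last by move=> t; rewrite ReM.
  have h1 := nS_Z (Re c) su1; have h2 := nS_N (nS_Z (Im c) su2).
  rewrite (@rsumD R T _ _ h1 h2) (@rsumN R T _ (nS_Z (Im c) su2)).
  by rewrite (@rsumZ R T _ _ su1) (@rsumZ R T _ _ su2).
rewrite (eq_rsum (v := fun t => Re c * Im (u t) + (Im c * Re (u t)))); last by move=> t; rewrite ImM.
rewrite (@rsumD R T _ _ (nS_Z (Re c) su2) (nS_Z (Im c) su1)).
by rewrite (@rsumZ R T _ _ su1) (@rsumZ R T _ _ su2).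
Qed.

Lemma csum_supp (T T' : choiceType) (e : T' -> T) (u : T -> C) :
  injective e -> (forall t, ~ range e t -> u t = 0) -> csum u = csum (u \o e).
Proof.
move=> ei uz; rewrite /csum (@rsum_supp R T T' e (fun t => Re (u t)) ei); last by move=> t /uz ->.
by rewrite (@rsum_supp R T T' e (fun t => Im (u t)) ei) // => t /uz ->.
Qed.

Lemma rsum_unit (c : R) : rsum (fun _ : unit => c) = c.
Proof.
rewrite /rsum !(esum_pt (s := tt)); try by move=> t; rewrite lee_fin le_max lexx orbT.
- by rewrite /= maxr0 maxNr0; case: ifP => _; rewrite ?subr0 ?sub0r ?opprK.
- by case.
- by case.
Qed.

Lemma csum_pt (T : choiceType) (s : T) (u : T -> C) :
  (forall t, t <> s -> u t = 0) -> csum u = u s.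
Proof.
move=> h; rewrite (csum_supp (e := fun _ : unit => s)); last 2 first.
- by move=> [] [].
- by move=> t Ht; apply: h => E; apply: Ht; exists tt.
by rewrite /csum !rsum_unit; case: (u s).
Qed.

Lemma csum_part (T K : choiceType) (p : T -> K) (u : T -> C) : cS u ->
  csum u = csum (fun k => csum (fun t => if p t == k then u t else 0)).
Proof.
move=> [s1 s2]; rewrite /csum; apply: cplx_eq; rewrite ?ReC ?ImC.
  rewrite (rsum_part p) //; apply: eq_rsum => k; apply: eq_rsum => t.
  by case: ifP.
rewrite (rsum_part p) //; apply: eq_rsum => k; apply: eq_rsum => t.
by case: ifP.
Qed.

End CS.

Section IP.
Variable R : realType.
Local Notation C := (R[i]).
Local Notation Re := (@complex.Re R).
Local Notation Im := (@complex.Im R).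

Lemma abs2J (x : C) : abs2 (conjc x) = abs2 x.
Proof. by case: x => a b; rewrite /abs2 /=; ring. Qed.
Lemma abs2M (x y : C) : abs2 (x * y) = abs2 x * abs2 y.
Proof. by case: x => a b; case: y => c d; rewrite /abs2 /=; ring. Qed.
Lemma abs21 : abs2 (1 : C) = 1.
Proof. by rewrite /abs2 /=; ring. Qed.
Lemma abs20 : abs2 (0 : C) = 0.
Proof. by rewrite /abs2 /=; ring. Qed.
Lemma abs2_nat (b : bool) : abs2 (b%:R : C) = b%:R.
Proof. by case: b; rewrite ?abs21 ?abs20. Qed.
Lemma abs2_prod (K : Type) (s : seq K) (F : K -> C) :
  abs2 (\prod_(k <- s) F k) = \prod_(k <- s) abs2 (F k).
Proof. by elim: s => [|k s IH]; rewrite ?big_nil ?big_cons ?abs21 // abs2M IH. Qed.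
Lemma abs2D (x y : C) : abs2 (x + y) <= 2 * abs2 x + 2 * abs2 y.
Proof.
case: x => a b; case: y => c d; rewrite /abs2 /=.
have := sqr_ge0 (a - c); have := sqr_ge0 (b - d); rewrite !expr2 => h1 h2; nra.
Qed.
Lemma abs2_sum (K : Type) (s : seq K) (F : K -> C) :
  abs2 (\sum_(k <- s) F k) <= 2 ^+ size s * \sum_(k <- s) abs2 (F k).
Proof.
elim: s => [|k s IH]; first by rewrite big_nil abs20 mulr_ge0 // ?big_nil ?exprn_ge0.
rewrite !big_cons /= exprS; apply: le_trans (abs2D _ _) _.
have h1 := abs2_ge0 (F k).
have h2 : 0 <= \sum_(k <- s) abs2 (F k) by rewrite sumr_ge0 // => i _; rewrite abs2_ge0.
have h3 : 1 <= (2 : R) ^+ size s by rewrite exprn_ege1 // ler1n.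
nra.
Qed.
Lemma abs2_eq0 (x : C) : abs2 x = 0 -> x = 0.
Proof.
case: x => a b; rewrite /abs2 /= => h.
have ha : a = 0 by apply/eqP; rewrite -sqrf_eq0; apply/eqP; nra.
have hb : b = 0 by apply/eqP; rewrite -sqrf_eq0; apply/eqP; nra.
by rewrite ha hb.
Qed.
Lemma conjc_sum (K : Type) (s : seq K) (F : K -> C) :
  conjc (\sum_(k <- s) F k) = \sum_(k <- s) conjc (F k).
Proof.
elim: s => [|k s IH]; rewrite ?big_nil ?big_cons; first by rewrite conjc0.
by rewrite -IH; case: (F k); case: (\sum_(j <- s) F j) => ? ? ? ? /=; congr Complex; ring.
Qed.
Lemma conjcM (x y : C) : conjc (x * y) = conjc x * conjc y.
Proof. by case: x => a b; case: y => c d /=; congr Complex; ring. Qed.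
Lemma conjcK' (x : C) : conjc (conjc x) = x.
Proof. by case: x => a b /=; rewrite opprK. Qed.

Lemma sqnorm_fin (T : choiceType) (S : set T) (x : T -> C) : l2 S x -> (sqnorm x < +oo)%E.
Proof. by case. Qed.

Lemma cS_inner (T : choiceType) (x y : T -> C) : (sqnorm x < +oo)%E -> (sqnorm y < +oo)%E ->
  cS (fun t => x t * conjc (y t)).
Proof.
move=> hx hy.
have H : (esum setT (fun t => (abs2 (x t) + abs2 (y t))%:E) < +oo)%E.
  by rewrite esumDr ?lte_add_pinfty // => t; apply: abs2_ge0.
split; apply: (nS_dom _ H) => t; rewrite /abs2; case: (x t) => a b; case: (y t) => c e /=;
  have := sqr_ge0 (a - c); have := sqr_ge0 (a + c); have := sqr_ge0 (b - e);
  have := sqr_ge0 (b + e); have := sqr_ge0 (a - e); have := sqr_ge0 (a + e);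
  have := sqr_ge0 (b - c); have := sqr_ge0 (b + c);
  rewrite !expr2 ler_norml => *; apply/andP; split; nra.
Qed.

Lemma inner_fin (T : choiceType) (x y : T -> C) : (sqnorm x < +oo)%E -> (sqnorm y < +oo)%E ->
  cS (fun t => x t * conjc (y t)).
Proof. exact: cS_inner. Qed.

End IP.

Section Tensor.
Variable d : nat.
Local Notation M := {ffun 'I_d -> nat}.

Definition upd (s : M) (j : 'I_d) (n : nat) : M := [ffun i => if i == j then n else s i].
Lemma upd_j (s : M) j n : upd s j n j = n. Proof. by rewrite ffunE eqxx. Qed.
Lemma upd_i (s : M) j n i : i != j -> upd s j n i = s i. Proof. by rewrite ffunE => /negPf ->. Qed.
Lemma upd_upd (s : M) j n m : upd (upd s j n) j m = upd s j m.
Proof. by apply/ffunP => i; rewrite !ffunE; case: eqP. Qed.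
Lemma upd_id (s : M) j : upd s j (s j) = s.
Proof. by apply/ffunP => i; rewrite !ffunE; case: eqP => // ->. Qed.
Lemma upd_inj (s : M) j : injective (upd s j).
Proof. by move=> n m /(congr1 (fun f : M => f j)); rewrite !upd_j. Qed.
Lemma upd_upd2 (s : M) j n : upd (upd s j 0) j n = upd s j n.
Proof. exact: upd_upd. Qed.

Definition Gen (K : comNzRingType) (g : 'I_d -> nat -> nat -> K) (j : nat) (s t : M) : K :=
  \prod_(i < d) (if (i < j)%N then g i (s i) (t i) else ((t i == s i)%:R)).

Lemma prod_ind (K : comNzRingType) (s t : M) :
  \prod_(i < d) (((t i == s i)%:R) : K) = ((t == s)%:R).
Proof.
case: (eqVneq t s) => [->|ne].
  by rewrite big1 // => i _; rewrite eqxx.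
case: (pickP (fun i => t i != s i)) => [i hi|h].
  by rewrite (bigD1 i) //= (negPf hi) mul0r.
by exfalso; move/eqP: ne; apply; apply/ffunP => i; move: (h i) => /= /negbFE /eqP.
Qed.

Lemma Gen0 (K : comNzRingType) g (s t : M) : @Gen K g 0%N s t = ((t == s)%:R).
Proof. by rewrite /Gen -prod_ind; apply: eq_bigr. Qed.

Lemma Gen_step (K : comNzRingType) g (jo : 'I_d) (s t : M) :
  @Gen K g jo.+1 s t = g jo (s jo) (t jo) * Gen g jo (upd s jo (t jo)) t.
Proof.
rewrite /Gen (bigD1 jo) //= [X in _ = _ * X](bigD1 jo) //= ltnSn ltnn upd_j eqxx mul1r.
congr (_ * _); apply: eq_bigr => i hi.
rewrite ltnS leq_eqVlt (negbTE hi : ((i : nat) == jo) = false) /= upd_i //.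
Qed.

Lemma Gen_supp (K : comNzRingType) g (jo : 'I_d) (s t : M) :
  t jo != s jo -> @Gen K g jo s t = 0.
Proof. by move=> h; rewrite /Gen (bigD1 jo) //= ltnn (negPf h) mul0r. Qed.

Lemma Gen_full (K : comNzRingType) g (s t : M) :
  @Gen K g d s t = \prod_(i < d) g i (s i) (t i).
Proof. by apply: eq_bigr => i _; rewrite ltn_ord. Qed.

Lemma prod_cond_step (K : comNzRingType) (F : 'I_d -> K) (jo : 'I_d) :
  \prod_(i < d | (i < jo.+1)%N) F i = F jo * \prod_(i < d | (i < jo)%N) F i.
Proof.
rewrite (bigD1 jo) //=; congr (_ * _); apply: eq_bigl => i.
rewrite ltnS leq_eqVlt; case: (eqVneq i jo) => [->|ne]; first by rewrite ltnn eqxx.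
by rewrite (negbTE ne : ((i : nat) == jo) = false) andbT.
Qed.

Variable R : realType.

Lemma abs2_Gen (g : 'I_d -> nat -> nat -> R[i]) j s t :
  abs2 (Gen g j s t) = Gen (fun i m n => abs2 (g i m n)) j s t.
Proof.
rewrite /Gen abs2_prod; apply: eq_bigr => i _; case: ifP => _ //.
by rewrite abs2_nat.
Qed.

Lemma Gen_ge0 (b : 'I_d -> nat -> R) j s t : (forall i n, 0 <= b i n) ->
  0 <= Gen (fun i _ n => b i n) j s t.
Proof. by move=> b0; rewrite /Gen prodr_ge0 // => i _; case: ifP => _ //; rewrite ler0n. Qed.

Lemma PF (b : 'I_d -> nat -> R) : (forall i n, 0 <= b i n) ->
  (forall i, (esum setT (fun n => (b i n)%:E) < +oo)%E) ->
  forall j, (j <= d)%N -> forall s,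
  esum setT (fun t => (Gen (fun i _ n => b i n) j s t)%:E) =
  (\prod_(i < d | (i < j)%N) fine (esum setT (fun n => (b i n)%:E)))%:E.
Proof.
move=> b0 bf; elim => [_ s|j IH hj s].
  rewrite big_pred0 // (esum_pt (s := s)).
  - by rewrite Gen0 eqxx.
  - by move=> t; rewrite lee_fin Gen_ge0.
  - by move=> t ht; rewrite Gen0; move/eqP: ht => /negPf ->.
pose jo := Ordinal hj.
change j with (nat_of_ord jo).
rewrite prod_cond_step.
rewrite (esum_part (fun t : M => t jo)); last by move=> t; rewrite lee_fin Gen_ge0.
set Q := \prod_(i < d | (i < jo)%N) fine (esum setT (fun n => (b i n)%:E)).
have inner : forall n, esum setT (fun t : M => if t jo == n then (Gen (fun i _ n => b i n) jo.+1 s t)%:E else 0%E)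
    = ((b jo n) * Q)%:E.
  move=> n.
  rewrite (eq_esum (b := fun t => ((b jo n) * Gen (fun i _ n => b i n) jo (upd s jo n) t)%:E)); last first.
    move=> t _; case: eqP => [<-|ne]; first by rewrite Gen_step.
    by rewrite Gen_supp ?mulr0 // upd_j; apply/eqP.
  rewrite esumZr //; last by move=> t; rewrite Gen_ge0.
  by rewrite (IH (ltnW hj)).
rewrite (eq_esum (b := fun n => (Q * b jo n)%:E)); last by move=> n _; rewrite inner mulrC.
have hQ : 0 <= Q by rewrite /Q prodr_ge0 // => i _; apply: fine_ge0; apply: esum_ge0 => n _; rewrite lee_fin.
rewrite (@esumZr R _ Q (b jo) hQ (b0 jo)).
have hf := esum_fin (b0 jo) (bf jo).
move: hf; set E := esum _ (fun n => (b jo n)%:E) => hf.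
by rewrite -(fineK hf) /= mulrC.
Qed.

End Tensor.

Section BT.
Variable R : realType.
Variable d : nat.
Local Notation M := {ffun 'I_d -> nat}.
Local Notation C := (R[i]).
Variable I : 'I_d -> set nat.
Variable g : 'I_d -> nat -> nat -> C.
Variable B : 'I_d -> R.
Hypothesis gl2 : forall i m, l2 (I i) (g i m).
Hypothesis B0 : forall i, 0 <= B i.
Hypothesis gB : forall i (x : nat -> C), l2 (I i) x ->
  (esum setT (fun n => (abs2 (inner x (g i n)))%:E) <= (B i)%:E * sqnorm x)%E.

Lemma Gsq j s : (j <= d)%N -> (sqnorm (Gen g j s) < +oo)%E.
Proof.
move=> hj; rewrite /sqnorm.
rewrite (eq_esum (b := fun t => (Gen (fun i _ n => abs2 (g i (s i) n)) j s t)%:E)); last first.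
  move=> t _; rewrite abs2_Gen; congr EFin; apply: eq_bigr => i _; by case: ifP.
rewrite PF //; first exact: ltry.
- by move=> i n; apply: abs2_ge0.
- by move=> i; case: (gl2 i (s i)).
Qed.

Lemma inner_step (x : M -> C) (hx : l2 (prodset I) x) (jo : 'I_d) s :
  inner x (Gen g jo.+1 s) = inner (fun n => inner x (Gen g jo (upd s jo n))) (g jo (s jo)).
Proof.
rewrite {1}/inner (csum_part (fun t : M => t jo)); last first.
  by apply: cS_inner; [exact: sqnorm_fin hx | apply: Gsq].
apply: eq_csum => n.
transitivity (csum (fun t => conjc (g jo (s jo) n) * (x t * conjc (Gen g jo (upd s jo n) t)))).
  apply: eq_csum => t; case: eqP => [<-|ne].
    by rewrite Gen_step conjcM; ring.
  by rewrite Gen_supp ?conjc0 ?mulr0 // upd_j; apply/eqP.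
rewrite csumZ; first by rewrite mulrC.
by apply: cS_inner; [exact: sqnorm_fin hx | apply: Gsq; apply: ltnW].
Qed.

Lemma W_vanish (x : M -> C) (hx : l2 (prodset I) x) (jo : 'I_d) s n :
  ~ I jo n -> inner x (Gen g jo (upd s jo n)) = 0.
Proof.
move=> hn; apply: csum0 => t; case: (eqVneq (t jo) n) => [e|ne].
  by rewrite hx.1 ?mul0r // => P; apply: hn; rewrite -e; apply: P.
by rewrite Gen_supp ?conjc0 ?mulr0 // upd_j.
Qed.

Lemma inner0 (x : M -> C) s : inner x (Gen g 0%N s) = x s.
Proof.
rewrite /inner (csum_pt (s := s)).
  by rewrite Gen0 eqxx conjc1 mulr1.
by move=> t ht; rewrite Gen0; move/eqP: ht => /negPf ->; rewrite conjc0 mulr0.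
Qed.

Lemma BI (x : M -> C) (hx : l2 (prodset I) x) : forall j, (j <= d)%N ->
  (esum setT (fun s => (abs2 (inner x (Gen g j s)))%:E) <=
   (\prod_(i < d | (i < j)%N) B i)%:E * sqnorm x)%E.
Proof.
elim => [_|j IH hj].
  rewrite big_pred0 // mul1e (eq_esum (b := fun s => (abs2 (x s))%:E)) //.
  by move=> s _; rewrite inner0.
pose jo := Ordinal hj.
change j with (nat_of_ord jo) in IH |- *.
rewrite prod_cond_step.
have IH' := IH (ltnW hj).
set K := \prod_(i < d | (i < jo)%N) B i in IH' *.
have K0 : 0 <= K by rewrite /K prodr_ge0.
set Cf := fun s => (abs2 (inner x (Gen g jo s)))%:E.
have Cf0 : forall s, (0 <= Cf s)%E by move=> s; rewrite lee_fin abs2_ge0.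
have finC : (esum setT Cf < +oo)%E.
  apply: le_lt_trans IH' _; rewrite lte_mul_pinfty //; try by rewrite lee_fin.
  exact: sqnorm_fin hx.
apply: (le_trans (_ : _ <= (B jo)%:E * esum setT Cf)%E); last first.
  by rewrite EFinM -muleA lee_wpmul2l // lee_fin.
rewrite (eq_esum (b := fun s => (abs2 (inner (fun n => inner x (Gen g jo (upd s jo n))) (g jo (s jo))))%:E)); last first.
  by move=> s _; rewrite inner_step.
rewrite (esum_part (fun s : M => upd s jo 0)); last by move=> s; rewrite lee_fin abs2_ge0.
rewrite [X in (_ <= _ * X)%E](esum_part (fun s : M => upd s jo 0)) //.
rewrite -esumZ //; last by move=> s'; apply: esum_ge0 => s _; case: ifP.
apply: le_esum => s' _.
have hsupp : forall (a : M -> \bar R) , (forall s, 0 <= a s)%E ->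
    esum setT (fun s => if upd s jo 0 == s' then a s else 0%E) =
    esum setT (fun n => if upd s' jo 0 == s' then a (upd s' jo n) else 0%E).
  move=> a a0; rewrite (esum_supp (e := upd s' jo)).
  - by apply: eq_esum => n _ /=; rewrite upd_upd.
  - exact: (@upd_inj d s' jo).
  - by move=> s; case: ifP.
  - move=> s hs; case: eqP => // E; exfalso; apply: hs; exists (s jo) => //.
    by rewrite -E upd_upd upd_id.
rewrite hsupp; last by move=> s; rewrite lee_fin abs2_ge0.
rewrite hsupp //.
case: eqP => _; last by rewrite !esum1 ?mule0.
pose W := fun n => inner x (Gen g jo (upd s' jo n)).
have EW : forall n, inner (fun n0 => inner x (Gen g jo (upd (upd s' jo n) jo n0))) (g jo (upd s' jo n jo)) = inner W (g jo n).
  move=> n; have -> : upd s' jo n jo = n by exact: upd_j.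
  have -> : (fun n0 => inner x (Gen g jo (upd (upd s' jo n) jo n0))) = W.
    by apply/funext => m; rewrite /W upd_upd.
  by [].
rewrite (eq_esum (b := fun n => (abs2 (inner W (g jo n)))%:E)); last first.
  by move=> n _; rewrite EW.
have hW : l2 (I jo) W.
  split; first by move=> n hn; apply: W_vanish.
  apply: (le_lt_trans _ finC).
  exact: (esum_line (@upd_inj d s' jo) Cf0).
by apply: le_trans (gB hW) _.
Qed.

Lemma tensor_bessel (x : M -> C) (hx : l2 (prodset I) x) :
  (esum setT (fun m : M => (abs2 (inner x (tensor (fun i => g i (m i)))))%:E) <=
   (\prod_(i < d) B i)%:E * sqnorm x)%E.
Proof.
have := BI hx (leqnn d).
rewrite (eq_bigl (fun i : 'I_d => true)); last by move=> i; rewrite ltn_ord.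
congr (_ <= _)%E; apply: eq_esum => m _; congr (EFin (abs2 (inner _ _))).
by apply/funext => t; rewrite Gen_full.
Qed.

Lemma tensor_sq (m : M) : (sqnorm (tensor (fun i => g i (m i))) < +oo)%E.
Proof.
have := Gsq m (leqnn d); congr (sqnorm _ < _)%E.
by apply/funext => t; rewrite Gen_full.
Qed.

End BT.

Section LA.
Variable K : fieldType.
Variable r : nat.
Variable P : 'rV[K]_r -> Prop.
Hypothesis HP : forall c : 'cV[K]_r, (forall v, P v -> v *m c = 0) -> c = 0.

Lemma LA_ker L (A : 'M[K]_(L, r)) : (\rank A < r)%N -> exists c : 'cV[K]_r, c != 0 /\ A *m c = 0.
Proof.
move=> hr.
have hk : kermx A^T != 0.
  by rewrite -mxrank_eq0 mxrank_ker mxrank_tr subn_eq0 -ltnNge.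
case: (pickP (fun i => row i (kermx A^T) != 0)) => [i hi|h]; last first.
  exfalso; move/negP: hk; apply; apply/eqP/row_matrixP => i.
  by move: (h i) => /= /negbFE /eqP ->; rewrite row0.
exists (row i (kermx A^T))^T; split; first by rewrite trmx_eq0.
by rewrite -[A in A *m _]trmxK -trmx_mul -row_mul mulmx_ker row0 trmx0.
Qed.

Lemma LA_step L (A : 'M[K]_(L, r)) : (\rank A < r)%N -> exists v, P v /\ ~~ (v <= A)%MS.
Proof.
move=> hr; have [c [cnz cA]] := LA_ker hr.
case: (pselect (exists v, P v /\ ~~ (v <= A)%MS)) => // hn.
exfalso; move/negP: cnz; apply; apply/eqP; apply: HP => v Pv.
have : (v <= A)%MS by apply/negPn/negP => hv; apply: hn; exists v.
by case/submxP => D ->; rewrite -mulmxA cA mulmx0.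
Qed.

Lemma LA_rank : forall n, (n <= r)%N ->
  exists L (A : 'M[K]_(L, r)), (forall l, P (row l A)) /\ (n <= \rank A)%N.
Proof.
elim => [_|n IH hn].
  by exists 0%N, 0; split => // -[l hl].
have [L [A [hA hr]]] := IH (ltnW hn).
case: (leqP n.+1 (\rank A)) => hr'; first by exists L, A.
have hrA : \rank A = n by apply/eqP; rewrite eqn_leq hr andbT -ltnS.
have [v [Pv nv]] : exists v, P v /\ ~~ (v <= A)%MS by apply: LA_step; rewrite hrA.
exists (L + 1)%N, (col_mx A v); split.
  move=> l; case: (splitP l) => i hi.
    have -> : l = lshift 1 i by apply: val_inj.
    by rewrite rowKu.
  have -> : l = rshift L i by apply: val_inj.
  rewrite rowKd; have -> : row i v = v by apply/rowP => k; rewrite !mxE (ord1 i).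
  exact: Pv.
rewrite -hrA; apply: rank_ltmx; rewrite ltmxE col_mx_sub (negbTE nv) andbF andbT.
by rewrite -addsmxE addsmxSl.
Qed.

Lemma LA_main (w : 'rV[K]_r) :
  exists L (A : 'M[K]_(L, r)), (forall l, P (row l A)) /\ exists D : 'rV[K]_L, w = D *m A.
Proof.
have [L [A [hA hr]]] := LA_rank (leqnn r).
exists L, A; split => //.
apply/submxP; apply: submx_full.
by rewrite /row_full eqn_leq rank_leq_col.
Qed.

End LA.

Section Ind.
Variable R : realType.
Variables d r : nat.
Local Notation M := {ffun 'I_d -> nat}.
Local Notation C := (R[i]).
Variable f : 'I_d -> 'I_r -> nat -> nat -> C.
Hypothesis indep : forall (j : 'I_d) (c : 'I_r -> C),
      (forall n i, \sum_(k < r) c k * f j k n i = 0) -> forall k, c k = 0.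

Lemma sum_single (k0 : 'I_r) (a : C) (P : 'I_r -> C) :
  \sum_(k < r) (if k == k0 then a else 0) * P k = a * P k0.
Proof.
rewrite (bigD1 k0) //= eqxx big1 ?addr0 // => k /negPf ->; by rewrite mul0r.
Qed.

Lemma Ind (S : seq 'I_d) : forall i0, uniq (i0 :: S) -> forall c : 'I_r -> C,
  (forall q p : M, \sum_(k < r) c k * \prod_(i <- i0 :: S) f i k (q i) (p i) = 0) ->
  forall k, c k = 0.
Proof.
elim: S => [|i1 S IH] i0 hu c hc.
  apply: (indep (j := i0)) => n t.
  have := hc [ffun=> n] [ffun=> t].
  by under eq_bigr do rewrite big_seq1 !ffunE.
move: hu; rewrite /= in_cons negb_or => /andP[/andP[ne01 ni0S] /andP[ni1S uS]].
have H1 : forall (q p : M) k, c k * \prod_(i <- i1 :: S) f i k (q i) (p i) = 0.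
  move=> q p.
  apply: (indep (j := i0) (c := fun k => c k * \prod_(i <- i1 :: S) f i k (q i) (p i))) => n t.
  have := hc (upd q i0 n) (upd p i0 t).
  have E : forall k, \prod_(i <- i0 :: i1 :: S) f i k (upd q i0 n i) (upd p i0 t i)
      = f i0 k n t * \prod_(i <- i1 :: S) f i k (q i) (p i).
    move=> k; rewrite big_cons !upd_j; congr (_ * _).
    apply: eq_big_seq => i hi.
    have hne : i != i0.
      by apply/eqP => E; move: hi; rewrite E in_cons (negbTE ne01) (negbTE ni0S).
    by rewrite !upd_i.
  move=> H; rewrite -[RHS]H; apply: eq_bigr => k _; rewrite E /=; ring.
move=> k0.
have hu1 : uniq (i1 :: S) by rewrite /= ni1S.
have H2 := IH i1 hu1 (fun k => if k == k0 then c k0 else 0).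
have := H2 _ k0; rewrite /= eqxx; apply.
by move=> q p; rewrite sum_single.
Qed.

End Ind.

Section TV.
Variable R : realType.
Variables d r : nat.
Local Notation M := {ffun 'I_d -> nat}.
Local Notation C := (R[i]).
Variable I : 'I_d -> set nat.
Variable f : 'I_d -> 'I_r -> nat -> nat -> C.
Hypothesis fl2 : forall j k n, l2 (I j) (f j k n).
Variable j : 'I_d.

Definition Sj := [seq i <- index_enum 'I_d | i != j].
Definition U (q p : M) (k : 'I_r) : C := \prod_(i <- Sj) f i k (q i) (p i).

Lemma U_upd q p k n : U (upd q j n) p k = U q p k.
Proof.
rewrite /U /Sj !big_filter; apply: eq_bigr => i hi; by rewrite upd_i.
Qed.

Lemma U_updp q p k n : U q (upd p j n) k = U q p k.
Proof.
rewrite /U /Sj !big_filter; apply: eq_bigr => i hi; by rewrite upd_i.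
Qed.

Variable p : M.
Hypothesis hp : forall i, I i (p i).

Definition X (x : nat -> C) : M -> C := fun t => if t == upd p j (t j) then x (t j) else 0.

Lemma X_upd x n : X x (upd p j n) = x n.
Proof. by rewrite /X upd_j eqxx. Qed.

Lemma X_out x t : ~ range (upd p j) t -> X x t = 0.
Proof.
move=> ht; rewrite /X; case: eqP => // E; exfalso; apply: ht; exists (t j) => //.
Qed.

Lemma X_sq x : sqnorm (X x) = sqnorm x.
Proof.
rewrite /sqnorm (esum_supp (e := upd p j)).
- by apply: eq_esum => n _ /=; rewrite X_upd.
- exact: (@upd_inj d p j).
- by move=> t; rewrite lee_fin abs2_ge0.
- by move=> t /X_out ->; rewrite abs20.
Qed.

Lemma X_l2 x : l2 (I j) x -> l2 (prodset I) (X x).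
Proof.
move=> [xv xs]; split; last by rewrite X_sq.
move=> t ht; rewrite /X; case: eqP => // E; apply: xv => hj; apply: ht => i.
case: (eqVneq i j) => [->|ne] //.
by rewrite E upd_i.
Qed.

Lemma tensor_line (m : M) n k :
  tensor (fun i => f i k (m i)) (upd p j n) = f j k (m j) n * U m p k.
Proof.
rewrite /tensor (bigD1 j) //= upd_j; congr (_ * _).
rewrite /U /Sj big_filter; apply: eq_bigr => i hi; by rewrite upd_i.
Qed.

Lemma inner_XF x (hx : l2 (I j) x) (m : M) :
  inner (X x) (Fseq f m) = \sum_(k < r) conjc (U m p k) * inner x (f j k (m j)).
Proof.
rewrite /inner (csum_supp (e := upd p j)); last 2 first.
- exact: (@upd_inj d p j).
- by move=> t /X_out ->; rewrite mul0r.
transitivity (csum (fun n => \sum_(k < r) conjc (U m p k) * (x n * conjc (f j k (m j) n)))).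
  apply: eq_csum => n /=; rewrite X_upd /Fseq conjc_sum mulr_sumr; apply: eq_bigr => k _.
  by rewrite tensor_line conjcM; ring.
rewrite csum_sum; last first.
  move=> k; apply: cS_Z; apply: cS_inner; [exact: sqnorm_fin hx | exact: sqnorm_fin (fl2 j k (m j))].
apply: eq_bigr => k _; rewrite csumZ //.
apply: cS_inner; [exact: sqnorm_fin hx | exact: sqnorm_fin (fl2 j k (m j))].
Qed.

End TV.

Section Lin.
Variable R : realType.

Lemma esum_sumR (K : choiceType) (s : seq K) (T : choiceType) (h : K -> T -> R) :
  (forall k t, 0 <= h k t) ->
  esum setT (fun t => (\sum_(k <- s) h k t)%:E) = \sum_(k <- s) esum setT (fun t => (h k t)%:E).
Proof.
move=> h0; rewrite (eq_esum (b := fun t => \sum_(k <- s) (h k t)%:E)); last by move=> t _; rewrite sumEFin.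
rewrite (@esum_sum R T K setT s xpredT (fun t k => (h k t)%:E)) // => t k _ _; by rewrite lee_fin.
Qed.

Lemma esum_lin_le (K : choiceType) (s : seq K) (T : choiceType) (w : K -> R) (h : K -> T -> R)
    (c : K -> R) (y : \bar R) :
  (forall k, 0 <= w k) -> (forall k t, 0 <= h k t) -> (forall k, 0 <= c k) -> (0 <= y)%E ->
  (forall k, esum setT (fun t => (h k t)%:E) <= (c k)%:E * y)%E ->
  (esum setT (fun t => (\sum_(k <- s) w k * h k t)%:E) <= (\sum_(k <- s) w k * c k)%:E * y)%E.
Proof.
move=> w0 h0 c0 y0 hb.
rewrite esum_sumR; last by move=> k t; rewrite mulr_ge0.
rewrite -sumEFin ge0_sume_distrl; last by move=> k _; rewrite lee_fin mulr_ge0.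
apply: lee_sum => k _.
rewrite esumZr // EFinM -muleA.
by apply: lee_wpmul2l; rewrite ?lee_fin.
Qed.

End Lin.

Section Part1If.
Variable R : realType.
Variables d r : nat.
Local Notation M := {ffun 'I_d -> nat}.
Local Notation C := (R[i]).
Variable I : 'I_d -> set nat.
Variable f : 'I_d -> 'I_r -> nat -> nat -> C.
Hypothesis fl2 : forall j k n, l2 (I j) (f j k n).

Local Notation T k m := (tensor (fun i => f i k (m i))).

Lemma inner_Fseq (x : M -> C) (hx : (sqnorm x < +oo)%E) (m : M) :
  inner x (Fseq f m) = \sum_(k < r) inner x (T k m).
Proof.
rewrite /inner -csum_sum; last first.
  by move=> k; apply: cS_inner => //; apply: (tensor_sq (g := fun i => f i k)).
apply: eq_csum => t; rewrite /Fseq conjc_sum mulr_sumr //.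
Qed.

Lemma Fseq_l2 (m : M) : l2 (prodset I) (Fseq f m).
Proof.
split.
  move=> t ht; have [i hi] : exists i, ~ I i (t i).
    by apply/existsNP => H; apply: ht => i; apply: H.
  rewrite /Fseq big1 // => k _; rewrite /tensor (bigD1 i) //=.
  by rewrite (fl2 i k (m i)).1 // mul0r.
apply: (le_lt_trans (_ : _ <= esum setT (fun t => (2 ^+ size (index_enum 'I_r) * \sum_(k < r) abs2 (T k m t))%:E))%E).
  apply: le_esum => t _; rewrite lee_fin; exact: abs2_sum.
rewrite (eq_esum (b := fun t => (\sum_(k < r) 2 ^+ size (index_enum 'I_r) * abs2 (T k m t))%:E)); last first.
  by move=> t _; rewrite mulr_sumr.
rewrite esum_sumR; last by move=> k t; rewrite mulr_ge0 ?exprn_ge0 ?abs2_ge0.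
apply: lte_sum_pinfty => k _.
rewrite esumZr ?exprn_ge0 //; last by move=> t; apply: abs2_ge0.
rewrite lte_mul_pinfty ?lee_fin ?exprn_ge0 //.
exact: (tensor_sq (g := fun i => f i k)).
Qed.

Lemma part1_if : (forall j k, bessel (I j) (f j k)) -> bessel (prodset I) (Fseq f).
Proof.
move=> hB.
have /choice [B HB] : forall jk : 'I_d * 'I_r, exists b : R, 0 < b /\
    forall x, l2 (I jk.1) x ->
      (esum setT (fun n => (abs2 (inner x (f jk.1 jk.2 n)))%:E) <= b%:E * sqnorm x)%E.
  by move=> [j k]; have [_ [b [b0 hb]]] := hB j k; exists b.
set N := 2 ^+ size (index_enum 'I_r) : R.
have N0 : 0 <= N by rewrite exprn_ge0.
set Bk := fun k : 'I_r => \prod_(i < d) B (i, k).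
have Bk0 : forall k, 0 <= Bk k by move=> k; rewrite prodr_ge0 // => i _; rewrite ltW // (HB (i, k)).1.
split; first exact: Fseq_l2.
exists (\sum_(k < r) N * Bk k + 1); split.
  by rewrite ltr_wpDl // sumr_ge0 // => k _; rewrite mulr_ge0.
move=> x hx; have hxs := sqnorm_fin hx.
have sq0 : (0 <= sqnorm x)%E by apply: esum_ge0 => t _; rewrite lee_fin abs2_ge0.
apply: (le_trans (_ : _ <= esum setT (fun m : M => (\sum_(k < r) N * abs2 (inner x (T k m)))%:E))%E).
  apply: le_esum => m _; rewrite lee_fin inner_Fseq // -mulr_sumr; exact: abs2_sum.
apply: le_trans.
  apply: (@esum_lin_le R 'I_r (index_enum 'I_r) M (fun _ => N) (fun k (m : M) => abs2 (inner x (T k m))) Bk (sqnorm x)) => //.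
    by move=> k t; apply: abs2_ge0.
  move=> k; apply: (tensor_bessel (g := fun i => f i k) (B := fun i => B (i, k))) => //.
  - by move=> i; rewrite ltW // (HB (i, k)).1.
  - by move=> i y hy; apply: (HB (i, k)).2.
by apply: lee_wpmul2r => //; rewrite lee_fin lerDl.
Qed.

End Part1If.

Section Part1OnlyIf.
Variable R : realType.
Variables d r : nat.
Local Notation M := {ffun 'I_d -> nat}.
Local Notation C := (R[i]).
Variable I : 'I_d -> set nat.
Variable f : 'I_d -> 'I_r -> nat -> nat -> C.
Hypothesis hd : (1 < d)%N.
Hypothesis hr : (0 < r)%N.
Hypothesis fl2 : forall j k n, l2 (I j) (f j k n).
Hypothesis indep : forall (j : 'I_d) (c : 'I_r -> C),
      (forall n i, \sum_(k < r) c k * f j k n i = 0) -> forall k, c k = 0.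

Lemma base_pt : exists p : M, forall i, I i (p i).
Proof.
have /choice [pf hpf] : forall i : 'I_d, exists n, I i n.
  move=> i; apply: contrapT => hn.
  have := indep (j := i) (c := fun _ => 1) _ (Ordinal hr).
  rewrite /= => H; have : (1 : C) = 0 by apply: H => n t; rewrite big1 // => k _;
    rewrite mul1r (fl2 i k n).1 // => hI; apply: hn; exists t.
  by move/eqP; rewrite oner_eq0.
by exists [ffun i => pf i] => i; rewrite ffunE.
Qed.

Lemma Sj_cons (j : 'I_d) : exists i0 S, Sj j = i0 :: S /\ uniq (i0 :: S).
Proof.
have hu : uniq (Sj j) by rewrite /Sj filter_uniq // index_enum_uniq.
have [i hi] : exists i : 'I_d, i != j.
  case: (eqVneq (j : nat) 0%N) => hj.
    exists (Ordinal hd); apply/eqP => E; move: hj; rewrite -E //.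
  exists (Ordinal (ltn_trans (ltnSn 0) hd)); apply/eqP => E; move: hj; rewrite -E //.
have : i \in Sj j by rewrite mem_filter hi mem_index_enum.
case E : (Sj j) => [|i0 S] //; move=> _; exists i0, S; split => //; by rewrite -E.
Qed.

Definition Pv (j : 'I_d) (v : 'rV[C]_r) :=
  exists q p : M, (forall i, I i (p i)) /\ v = \row_k U f j q p k.

Lemma HPv (j : 'I_d) (p0 : M) (hp0 : forall i, I i (p0 i)) :
  forall c : 'cV[C]_r, (forall v, Pv j v -> v *m c = 0) -> c = 0.
Proof.
move=> c hc; apply/matrixP => k z; rewrite (ord1 z) mxE.
have [i0 [S [ES uS]]] := Sj_cons j.
apply: (Ind indep uS (c := fun k => c k 0)) => q p'.
rewrite -ES.
case: (pselect (forall i, i != j -> I i (p' i))) => hp'.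
  pose p := upd p' j (p0 j).
  have hp : forall i, I i (p i).
    move=> i; case: (eqVneq i j) => [->|ne]; first by rewrite /p upd_j.
    by rewrite /p upd_i //; apply: hp'.
  have := hc (\row_k U f j q p k) (ex_intro _ q (ex_intro _ p (conj hp erefl))).
  move/matrixP/(_ 0 0); rewrite !mxE => H; rewrite -[RHS]H.
  apply: eq_bigr => k' _; rewrite !mxE /p U_updp mulrC //.
have [i [hij hi]] : exists i, i != j /\ ~ I i (p' i).
  by apply: contrapT => H; apply: hp' => i hij; apply: contrapT => hi; apply: H; exists i.
apply: big1 => k' _; apply/eqP; rewrite mulf_eq0 prodf_seq_eq0; apply/orP; right.
apply/hasP; exists i; first by rewrite mem_filter hij mem_index_enum.
by rewrite /= (fl2 i k' (q i)).1.
Qed.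

Lemma part1_onlyif : bessel (prodset I) (Fseq f) -> forall j k, bessel (I j) (f j k).
Proof.
move=> [_ [BF [BF0 hBF]]] j k0.
have [p0 hp0] := base_pt.
have [L [A [hA [D hD]]]] := LA_main (HPv (j := j) hp0) (\row_k ((k == k0)%:R)).
have /choice [qp hqp] : forall l : 'I_L, exists qp : M * M,
    (forall i, I i (qp.2 i)) /\ row l A = \row_k U f j qp.1 qp.2 k.
  by move=> l; have [q [p [h1 h2]]] := hA l; exists (q, p).
have Aent : forall l k, A l k = U f j (qp l).1 (qp l).2 k.
  by move=> l k; have := congr1 (fun v : 'rV[C]_r => v 0 k) (hqp l).2; rewrite !mxE.
have hdelta : forall k, ((k == k0)%:R : C) = \sum_(l < L) D 0 l * A l k.
  by move=> k; have := congr1 (fun v : 'rV[C]_r => v 0 k) hD; rewrite !mxE.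
split; first by move=> n; apply: fl2.
set N := 2 ^+ size (index_enum 'I_L) : R.
have N0 : 0 <= N by rewrite exprn_ge0.
exists (\sum_(l < L) N * abs2 (D 0 l) * BF + 1); split.
  by rewrite ltr_wpDl // sumr_ge0 // => l _; rewrite !mulr_ge0 ?abs2_ge0 // ltW.
move=> x hx.
have sq0 : (0 <= sqnorm x)%E by apply: esum_ge0 => t _; rewrite lee_fin abs2_ge0.
pose a := fun k n => inner x (f j k n).
pose b := fun l n => \sum_(k < r) conjc (U f j (qp l).1 (qp l).2 k) * a k n.
have key : forall n, conjc (a k0 n) = \sum_(l < L) D 0 l * conjc (b l n).
  move=> n.
  have -> : conjc (a k0 n) = \sum_(k < r) (k == k0)%:R * conjc (a k n).
    rewrite (bigD1 k0) //= eqxx mul1r big1 ?addr0 // => k /negPf ->; by rewrite mul0r.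
  under eq_bigr do rewrite hdelta mulr_suml.
  rewrite exchange_big; apply: eq_bigr => l _.
  rewrite /b conjc_sum mulr_sumr; apply: eq_bigr => k _.
  by rewrite conjcM conjcK' Aent; ring.
have bnd : forall n, abs2 (a k0 n) <= \sum_(l < L) (N * abs2 (D 0 l)) * abs2 (b l n).
  move=> n; rewrite -abs2J key; apply: le_trans; first exact: abs2_sum.
  rewrite -/N mulr_sumr; apply: ler_sum => l _.
  by rewrite abs2M abs2J mulrA.
have hb : forall l, (esum setT (fun n => (abs2 (b l n))%:E) <= BF%:E * sqnorm x)%E.
  move=> l; have [hp hrow] := hqp l.
  set q := (qp l).1; set p := (qp l).2.
  have E : forall n, b l n = inner (X j p x) (Fseq f (upd q j n)).
    move=> n; rewrite (inner_XF fl2 p hx) /b; apply: eq_bigr => k _.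
    by rewrite U_upd upd_j.
  rewrite (eq_esum (b := fun n => (abs2 (inner (X j p x) (Fseq f (upd q j n))))%:E)); last first.
    by move=> n _; rewrite E.
  apply: le_trans.
    apply: (esum_line (e := upd q j) (a := fun m => (abs2 (inner (X j p x) (Fseq f m)))%:E)).
    - exact: (@upd_inj d q j).
    - by move=> m; rewrite lee_fin abs2_ge0.
  by rewrite -(X_sq j p x); apply: hBF; apply: X_l2.
apply: le_trans.
  apply: (le_esum (b := fun n => (\sum_(l < L) (N * abs2 (D 0 l)) * abs2 (b l n))%:E)).
  by move=> n _; rewrite lee_fin bnd.
apply: le_trans.
  apply: (@esum_lin_le R 'I_L (index_enum 'I_L) nat (fun l => N * abs2 (D 0 l))
     (fun l n => abs2 (b l n)) (fun _ => BF) (sqnorm x)) => //.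
  - by move=> l; rewrite mulr_ge0 ?abs2_ge0.
  - by move=> l n; apply: abs2_ge0.
  - by move=> l; apply: ltW.
by apply: lee_wpmul2r => //; rewrite lee_fin lerDl.
Qed.

End Part1OnlyIf.

Section Part2.
Variable R : realType.
Variables d r : nat.
Local Notation M := {ffun 'I_d -> nat}.
Local Notation C := (R[i]).
Variable I : 'I_d -> set nat.
Variable f : 'I_d -> 'I_r -> nat -> nat -> C.

Lemma esum_pair (a : 'I_r * nat -> \bar R) : (forall t, 0 <= a t)%E ->
  esum setT a = \sum_(k < r) esum setT (fun n => a (k, n)).
Proof.
move=> a0.
rewrite (eq_esum (b := fun t => \sum_(k < r) (if t.1 == k then a t else 0%E))); last first.
  move=> t _; rewrite (bigD1 t.1) //= eqxx big1 ?adde0 // => k hk.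
  by rewrite eq_sym (negbTE hk).
rewrite (@esum_sum R _ _ setT (index_enum 'I_r) xpredT (fun t k => if t.1 == k then a t else 0%E)); last first.
  by move=> t k _ _; case: ifP.
apply: eq_bigr => k _.
rewrite (esum_supp (e := fun n => (k, n))).
- by apply: eq_esum => n _ /=; rewrite eqxx.
- by move=> n m [].
- by move=> t; case: ifP.
- move=> [k' n] /= hn; case: eqP => // E; exfalso; apply: hn; exists n => //; by rewrite E.
Qed.

Definition evec (t0 : nat) : nat -> C := fun t => (t == t0)%:R.

Lemma evec_sq t0 : sqnorm (evec t0) = 1%E.
Proof.
rewrite /sqnorm (esum_pt (s := t0)).
- by rewrite /evec eqxx abs21.
- by move=> t; rewrite lee_fin abs2_ge0.
- by move=> t ht; rewrite /evec; move/eqP: ht => /negPf ->; rewrite abs20.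
Qed.

Lemma evec_l2 (S : set nat) t0 : S t0 -> l2 S (evec t0).
Proof.
move=> h; split; last by rewrite evec_sq ltry.
by move=> t ht; rewrite /evec; case: eqP => // E; exfalso; apply: ht; rewrite E.
Qed.

Lemma inner_evec t0 (g : nat -> C) : inner (evec t0) g = conjc (g t0).
Proof.
rewrite /inner (csum_pt (s := t0)); first by rewrite /evec eqxx mul1r.
by move=> t ht; rewrite /evec; move/eqP: ht => /negPf ->; rewrite mul0r.
Qed.

Lemma sum_prod_le (s : seq 'I_r) (al be : 'I_r -> R) :
  (forall k, 0 <= al k) -> (forall k, 0 <= be k) ->
  \sum_(k <- s) al k * be k <= (\sum_(k <- s) al k) * (\sum_(k <- s) be k).
Proof.
move=> a0 b0; elim: s => [|k s IH]; first by rewrite !big_nil mul0r.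
rewrite !big_cons.
have h1 : 0 <= \sum_(k <- s) al k by rewrite sumr_ge0.
have h2 : 0 <= \sum_(k <- s) be k by rewrite sumr_ge0.
have := a0 k; have := b0 k; nra.
Qed.

Hypothesis hd : (1 < d)%N.
Hypothesis hr : (0 < r)%N.
Hypothesis fl2 : forall j k n, l2 (I j) (f j k n).
Hypothesis indep : forall (j : 'I_d) (c : 'I_r -> C),
      (forall n i, \sum_(k < r) c k * f j k n i = 0) -> forall k, c k = 0.

Lemma part2 : frame (prodset I) (Fseq f) ->
  forall j, frame (I j) (fun p : 'I_r * nat => f j p.1 p.2).
Proof.
move=> [hFb [A [A0 hA]]] j.
have hB := part1_onlyif hd hr fl2 indep hFb.
have /choice [B HB] : forall jk : 'I_d * 'I_r, exists b : R, 0 < b /\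
    forall x, l2 (I jk.1) x ->
      (esum setT (fun n => (abs2 (inner x (f jk.1 jk.2 n)))%:E) <= b%:E * sqnorm x)%E.
  by move=> [j' k]; have [_ [b [b0 hb]]] := hB j' k; exists b.
have [p0 hp0] := base_pt hr fl2 indep.
have Sfin : forall x, l2 (I j) x -> forall k,
    (esum setT (fun n => (abs2 (inner x (f j k n)))%:E) < +oo)%E.
  move=> x hx k; apply: le_lt_trans ((HB (j, k)).2 x hx) _.
  by rewrite lte_mul_pinfty ?lee_fin ?ltW ?(HB (j, k)).1 //; exact: sqnorm_fin hx.
have Epair : forall x, esum setT (fun pk : 'I_r * nat => (abs2 (inner x (f j pk.1 pk.2)))%:E) =
    \sum_(k < r) esum setT (fun n => (abs2 (inner x (f j k n)))%:E).
  by move=> x; rewrite esum_pair // => t; rewrite lee_fin abs2_ge0.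
split.
  split; first by move=> pk; apply: fl2.
  exists (\sum_(k < r) B (j, k) + 1); split.
    by rewrite ltr_wpDl // sumr_ge0 // => k _; rewrite ltW // (HB (j, k)).1.
  move=> x hx; rewrite Epair.
  have sq0 : (0 <= sqnorm x)%E by apply: esum_ge0 => t _; rewrite lee_fin abs2_ge0.
  apply: (le_trans (_ : _ <= \sum_(k < r) (B (j, k))%:E * sqnorm x)%E).
    by apply: lee_sum => k _; apply: (HB (j, k)).2.
  rewrite -ge0_sume_distrl; last by move=> k _; rewrite lee_fin ltW // (HB (j, k)).1.
  by rewrite sumEFin; apply: lee_wpmul2r => //; rewrite lee_fin lerDl.
pose bb := fun (k : 'I_r) (i : 'I_d) (x : nat -> C) (n : nat) =>
  if i == j then abs2 (inner x (f j k n)) else abs2 (f i k n (p0 i)).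
have bb0 : forall k i x n, 0 <= bb k i x n by move=> k i x n; rewrite /bb; case: ifP => _; apply: abs2_ge0.
have bbfin : forall x, l2 (I j) x -> forall k i, (esum setT (fun n => (bb k i x n)%:E) < +oo)%E.
  move=> x hx k i; rewrite /bb; case: eqP => [_|ne]; first exact: Sfin.
  apply: (le_lt_trans (_ : _ <= (B (i, k))%:E * sqnorm (evec (p0 i)))%E).
    have := (HB (i, k)).2 (evec (p0 i)) (evec_l2 (hp0 i)).
    by under eq_esum do rewrite inner_evec abs2J.
  by rewrite evec_sq mule1 ltry.
pose N := 2 ^+ size (index_enum 'I_r) : R.
have N0 : 0 <= N by rewrite exprn_ge0.
pose Dk := fun x k => \prod_(i < d | i != j) fine (esum setT (fun n => (bb k i x n)%:E)).
have Dk_x : forall x y k, Dk x k = Dk y k.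
  move=> x y k; apply: eq_bigr => i hi; by rewrite /bb (negbTE hi).
pose Q := N * \sum_(k < r) Dk (fun _ => 0) k.
have Dk0 : forall x k, 0 <= Dk x k.
  by move=> x k; apply: prodr_ge0 => i _; apply: fine_ge0; apply: esum_ge0 => n _; rewrite lee_fin.
have Q0 : 0 <= Q by rewrite mulr_ge0 // sumr_ge0.
exists (A / (Q + 1)); split; first by rewrite divr_gt0 // ltr_wpDl.
move=> x hx.
have sfin := sqnorm_fin hx.
have sq0 : (0 <= sqnorm x)%E by apply: esum_ge0 => t _; rewrite lee_fin abs2_ge0.
set sx := fine (sqnorm x).
have sxE : sqnorm x = sx%:E by rewrite fineK // fin_lt.
have sx0 : 0 <= sx by rewrite /sx fine_ge0.
pose Sa := fun k => fine (esum setT (fun n => (abs2 (inner x (f j k n)))%:E)).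
have SaE : forall k, esum setT (fun n => (abs2 (inner x (f j k n)))%:E) = (Sa k)%:E.
  by move=> k; rewrite fineK // fin_lt ?Sfin //; apply: esum_ge0 => n _; rewrite lee_fin abs2_ge0.
have Sa0 : forall k, 0 <= Sa k by move=> k; rewrite /Sa fine_ge0 // esum_ge0 // => n _; rewrite lee_fin abs2_ge0.
rewrite Epair; under eq_bigr do rewrite SaE.
rewrite sumEFin sxE -EFinM lee_fin.
have hX := X_l2 hp0 hx.
have low := hA _ hX; rewrite X_sq sxE in low.
have up : (esum setT (fun m : M => (abs2 (inner (X j p0 x) (Fseq f m)))%:E) <=
           (\sum_(k < r) N * (Sa k * Dk x k))%:E)%E.
  apply: (le_trans (_ : _ <= esum setT (fun m : M => (\sum_(k < r) N * (\prod_(i < d) bb k i x (m i)))%:E))%E).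
    apply: le_esum => m _; rewrite lee_fin (inner_XF fl2 p0 hx) -mulr_sumr.
    apply: le_trans; first exact: abs2_sum.
    apply: ler_wpM2l => //; apply: ler_sum => k _.
    rewrite abs2M abs2J (bigD1 j) //= {1}/bb eqxx mulrC; rewrite le_eqVlt; apply/orP; left; apply/eqP; congr (_ * _).
    rewrite /U abs2_prod /Sj big_filter; apply: eq_bigr => i hi.
    by rewrite /bb (negbTE hi).
  rewrite esum_sumR; last by move=> k m; rewrite mulr_ge0 // prodr_ge0.
  rewrite -sumEFin; apply: lee_sum => k _.
  rewrite esumZr //; last by move=> m; rewrite prodr_ge0.
  rewrite (eq_esum (b := fun m : M => (Gen (fun i _ n => bb k i x n) d p0 m)%:E)); last first.
    by move=> m _; rewrite Gen_full.
  rewrite (PF (b := fun i n => bb k i x n)) //; last by move=> i; apply: bbfin.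
  rewrite (eq_bigl (fun i : 'I_d => true)); last by move=> i; rewrite ltn_ord.
  rewrite (bigD1 j) //= {1}/bb eqxx -/(Sa k) EFinM.
  by rewrite lee_fin; apply: le_refl.
have main : A * sx <= \sum_(k < r) N * (Sa k * Dk x k).
  by rewrite -lee_fin EFinM; apply: le_trans low up.
have SS0 : 0 <= \sum_(k < r) Sa k by rewrite sumr_ge0.
have hQ : \sum_(k < r) N * (Sa k * Dk x k) <= Q * \sum_(k < r) Sa k.
  rewrite -mulr_sumr /Q -mulrA ler_wpM2l //.
  rewrite mulrC; under eq_bigr do rewrite (Dk_x x (fun _ => 0)).
  by apply: sum_prod_le => // k; apply: Dk0.
rewrite mulrAC ler_pdivrMr; last by rewrite ltr_wpDl.
nra.
Qed.

End Part2.

Unset Implicit Arguments. Set Strict Implicit. Set Printing Implicit Defensive.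

Theorem theorem1p3 (R : realType) (d r : nat) (I : 'I_d -> set nat)
    (f : 'I_d -> 'I_r -> nat -> nat -> R[i]) :
  (1 < d)%N -> (0 < r)%N ->
  (forall j k n, l2 (I j) (f j k n)) ->
  (forall (j : 'I_d) (c : 'I_r -> R[i]),
      (forall n i, \sum_(k < r) c k * f j k n i = 0) -> forall k, c k = 0) ->
  (bessel (prodset I) (Fseq f) <-> (forall j k, bessel (I j) (f j k)))
  /\
  (frame (prodset I) (Fseq f) ->
     forall j, frame (I j) (fun p : 'I_r * nat => f j p.1 p.2)).
Proof.
move=> hd hr fl2 indep; split; first split.
- exact: part1_onlyif hd hr fl2 indep.
- exact: part1_if fl2.
- exact: part2 hd hr fl2 indep.
Qed.
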